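(* Let $G$ be a hyperbolic group acting by cubical automorphisms on a CAT$(0)$ cube complex $X$, and let $X^b$ be the cubical subdivision of $X$ (with the induced $G$--action). Then the stabilizers of hyperplanes for the $G$--action on $X$ are all quasi-convex in $G$ if and only if the stabilizers of hyperplanes for the $G$--action on $X^b$ are all quasi-convex in $G$.
   Context: The cubical subdivision $X^b$ of a cube complex $X$ is obtained by replacing each $n$--cube of $X$ by $2^n$ $n$--cubes, subdividing each coordinate interval into two equal halves, glued in the way induced from $X$. *)

(* Defs.v *)
From Stdlib Require Import List Arith Bool Relations.
Import ListNotations.

Set Implicit Arguments.

Record Group := MkGroup {
  gcar :> Type;
  gmul : gcar -> gcar -> gcar;
  gone : gcar;
  ginv : gcar -> gcar;
  gassoc : forall x y z, gmul x (gmul y z) = gmul (gmul x y) z;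
  gone_l : forall x, gmul gone x = x;
  ginv_l : forall x, gmul (ginv x) x = gone
}.

Arguments gmul {g}.
Arguments gone {g}.
Arguments ginv {g}.

(* [is_path E x p y]: the vertex sequence x :: p is an edge path from x to y;
   its length is [length p]. *)
Fixpoint is_path {T : Type} (E : T -> T -> Prop) (x : T) (p : list T) (y : T)
  : Prop :=
  match p with
  | [] => x = y
  | z :: q => E x z /\ is_path E z q y
  end.

Definition geodesic {T : Type} (E : T -> T -> Prop) (x : T) (p : list T) (y : T)
  : Prop :=
  is_path E x p y /\ forall q, is_path E x q y -> length p <= length q.

Definition dist_le {T : Type} (E : T -> T -> Prop) (x y : T) (n : nat) : Prop :=
  exists p, is_path E x p y /\ length p <= n.

Definition in_interval {T : Type} (E : T -> T -> Prop) (x y m : T) : Prop :=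
  exists p q, geodesic E x (p ++ q) y /\ is_path E x p m.

Definition cay_adj (G : Group) (S : list G) (x y : G) : Prop :=
  exists s, In s S /\ (y = gmul x s \/ y = gmul x (ginv s)).

Definition generates (G : Group) (S : list G) : Prop :=
  forall g : G, exists p, is_path (@cay_adj G S) gone p g.

Definition hyperbolic_wrt (G : Group) (S : list G) : Prop :=
  exists delta : nat, forall (x y z : G) (p q r : list G),
    geodesic (@cay_adj G S) x p y -> geodesic (@cay_adj G S) y q z ->
    geodesic (@cay_adj G S) z r x ->
    forall v, In v (x :: p) ->
      exists w, (In w (y :: q) \/ In w (z :: r)) /\ dist_le (@cay_adj G S) v w delta.

Definition quasiconvex_wrt (G : Group) (S : list G) (H : G -> Prop) : Prop :=
  exists K : nat, forall (x y : G) (p : list G),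
    H x -> H y -> geodesic (@cay_adj G S) x p y ->
    forall v, In v (x :: p) -> exists h, H h /\ dist_le (@cay_adj G S) v h K.

(** * CAT(0) cube complexes, modelled by their 1-skeleta (median graphs) *)
Definition median_graph {V : Type} (E : V -> V -> Prop) : Prop :=
  (forall x y, E x y -> E y x) /\
  (forall x, ~ E x x) /\
  (forall x y, exists p, is_path E x p y) /\
  (forall x y z, exists m,
      (in_interval E x y m /\ in_interval E y z m /\ in_interval E x z m) /\
      forall m', in_interval E x y m' -> in_interval E y z m' ->
                 in_interval E x z m' -> m' = m).

Fixpoint hamming (l1 l2 : list bool) : nat :=
  match l1, l2 with
  | b1 :: t1, b2 :: t2 => (if Bool.eqb b1 b2 then 0 else 1) + hamming t1 t2
  | _, _ => 0
  end.

(* C (a set of vertices) spans an n-cube: the induced subgraph on C is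
   isomorphic to the hypercube graph Q_n (vertices = bit strings of length n). *)
Definition is_cube {V : Type} (E : V -> V -> Prop) (C : V -> Prop) (n : nat)
  : Prop :=
  exists f : list bool -> V,
    (forall l, length l = n -> C (f l)) /\
    (forall v, C v -> exists l, length l = n /\ f l = v) /\
    (forall l l', length l = n -> length l' = n -> f l = f l' -> l = l') /\
    (forall l l', length l = n -> length l' = n ->
        (E (f l) (f l') <-> hamming l l' = 1)).

(** * Cubical subdivision: its 1-skeleton has one vertex per cube of X, two
      cubes being adjacent iff one is a codimension-1 face of the other.
      Vertices of the subdivision are represented by sets of vertices of X;
      sets that are not cubes are isolated and carry no edges. *)
Definition subdiv_adj {V : Type} (E : V -> V -> Prop) (C D : V -> Prop) : Prop :=
  exists n,
    (is_cube E C n /\ is_cube E D (S n) /\ (forall v, C v -> D v)) \/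
    (is_cube E D n /\ is_cube E C (S n) /\ (forall v, D v -> C v)).

Definition image_act {G : Group} {V : Type} (act : G -> V -> V)
  (g : G) (C : V -> Prop) : V -> Prop :=
  fun v => exists w, C w /\ act g w = v.

Definition is_action (G : Group) {V : Type} (act : G -> V -> V) : Prop :=
  (forall v, act gone v = v) /\
  (forall (g h : G) v, act (gmul g h) v = act g (act h v)).

(** * Hyperplanes: classes of (oriented) edges under the equivalence relation
      generated by "opposite edges of a square" and edge reversal. *)
Definition square_opp {V : Type} (E : V -> V -> Prop) (a b c d : V) : Prop :=
  E a b /\ E c d /\ E a c /\ E b d /\ a <> d /\ b <> c.

Definition edge_rel {V : Type} (E : V -> V -> Prop) (e f : V * V) : Prop :=
  square_opp E (fst e) (snd e) (fst f) (snd f) \/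
  (E (fst e) (snd e) /\ fst f = snd e /\ snd f = fst e).

Definition same_hyperplane {V : Type} (E : V -> V -> Prop) : relation (V * V) :=
  clos_refl_sym_trans (V * V) (edge_rel E).

Definition hyp_stab {G : Group} {V : Type} (E : V -> V -> Prop)
  (act : G -> V -> V) (a b : V) : G -> Prop :=
  fun g => same_hyperplane E (a, b) (act g a, act g b).

Definition all_hyp_stab_qc (G : Group) (S : list G) {V : Type}
  (E : V -> V -> Prop) (act : G -> V -> V) : Prop :=
  forall a b, E a b -> @quasiconvex_wrt G S (hyp_stab E act a b).

(* Main.v *)
Require Import Defs.
From Stdlib Require Import List Arith Bool Relations Lia Classical ClassicalEpsilon FunctionalExtensionality PropExtensionality.
Import ListNotations.


Fixpoint flip (k : nat) (l : list bool) : list bool :=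
  match l with
  | [] => []
  | b :: t => match k with 0 => negb b :: t | S k' => b :: flip k' t end
  end.

Lemma flip_length k l : length (flip k l) = length l.
Proof. revert k; induction l; intros [|k]; simpl; auto. Qed.

Lemma flip_flip k l : flip k (flip k l) = l.
Proof. revert k; induction l; intros [|k]; simpl; try rewrite negb_involutive; try rewrite IHl; auto. Qed.

Lemma flip_comm j k l : flip j (flip k l) = flip k (flip j l).
Proof. revert j k; induction l; intros [|j] [|k]; simpl; try rewrite IHl; auto. Qed.

Lemma nth_flip i k l : nth i (flip k l) false =
  if Nat.eqb i k then (if Nat.ltb i (length l) then negb (nth i l false) else false) else nth i l false.
Proof.
  revert i k; induction l; intros [|i] [|k]; simpl; auto.
  all: try (destruct (_ =? _); reflexivity).
Qed.

Lemma nth_flip_eq k l : k < length l -> nth k (flip k l) false = negb (nth k l false).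
Proof. intros H. rewrite nth_flip, Nat.eqb_refl. apply Nat.ltb_lt in H. rewrite H. auto. Qed.

Lemma nth_flip_neq i k l : i <> k -> nth i (flip k l) false = nth i l false.
Proof. intros H. rewrite nth_flip. apply Nat.eqb_neq in H. rewrite H. auto. Qed.

Lemma hamming_sym l l' : hamming l l' = hamming l' l.
Proof. revert l'; induction l; intros [|b l']; simpl; auto. rewrite IHl. destruct a, b; auto. Qed.

Lemma hamming_refl l : hamming l l = 0.
Proof. induction l; simpl; auto. rewrite IHl; destruct a; auto. Qed.

Lemma hamming_0 l l' : length l = length l' -> hamming l l' = 0 -> l = l'.
Proof.
  revert l'; induction l; intros [|b l'] Hl H; simpl in *; try discriminate; auto.
  destruct a, b; simpl in H; try discriminate; f_equal; apply IHl; auto.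
Qed.

Lemma hamming_flip_flip k l l' : length l = length l' ->
  hamming (flip k l) (flip k l') = hamming l l'.
Proof.
  revert k l'; induction l; intros [|k] [|b l'] Hl; simpl in *; try discriminate; auto.
  all: try (destruct a, b; reflexivity).
  all: rewrite IHl; auto.
Qed.

Lemma hamming_flip k l : k < length l -> hamming l (flip k l) = 1.
Proof.
  revert k; induction l; intros [|k] Hk; simpl in *; try lia.
  - rewrite hamming_refl. destruct a; auto.
  - rewrite IHl by lia. destruct a; auto.
Qed.

Lemma hamming_1 l l' : length l = length l' -> hamming l l' = 1 ->
  exists k, k < length l /\ l' = flip k l.
Proof.
  revert l'; induction l; intros [|b l'] Hl H; simpl in *; try discriminate.
  destruct (Bool.eqb a b) eqn:E.
  - apply Bool.eqb_prop in E; subst. simpl in H.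
    destruct (IHl l') as [k [Hk ->]]; auto. exists (S k); split; auto; lia.
  - simpl in H. exists 0; split; [lia|].
    assert (l = l') by (apply hamming_0; auto; lia). subst.
    destruct a, b; simpl in *; auto; discriminate.
Qed.

Lemma flip_inj_idx j k l : j < length l -> k < length l -> flip j l = flip k l -> j = k.
Proof.
  intros Hj Hk H. destruct (Nat.eq_dec j k); auto.
  assert (nth j (flip j l) false = nth j (flip k l) false) by (rewrite H; auto).
  rewrite nth_flip_eq, nth_flip_neq in H0 by auto. destruct (nth j l false); discriminate.
Qed.

Lemma flip_neq k l : k < length l -> flip k l <> l.
Proof. intros Hk H. assert (hamming l (flip k l) = 1) by (apply hamming_flip; auto).
  rewrite H, hamming_refl in H0. discriminate. Qed.

Lemma hamming_flip2 j k l : j < length l -> k < length l -> j <> k ->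
  hamming l (flip j (flip k l)) = 2.
Proof.
  revert j k; induction l; intros [|j] [|k] Hj Hk Hjk; simpl in *; try lia.
  - rewrite hamming_flip by lia. destruct a; auto.
  - rewrite hamming_flip by lia. destruct a; auto.
  - rewrite IHl by lia. destruct a; auto.
Qed.

Lemma common_nbr s t x w : s < length x -> t < length x -> s <> t ->
  length w = length x ->
  hamming w (flip s x) = 1 -> hamming w (flip t x) = 1 ->
  w = x \/ w = flip s (flip t x).
Proof.
  intros Hs Ht Hst Hw H1 H2.
  rewrite hamming_sym in H1, H2.
  apply hamming_1 in H1; [|rewrite flip_length; auto].
  apply hamming_1 in H2; [|rewrite flip_length; auto].
  destruct H1 as [r [Hr E1]]. destruct H2 as [q [Hq E2]].
  rewrite flip_length in Hr, Hq.
  destruct (Nat.eq_dec r s). { subst. left. apply flip_flip. }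
  right. subst w.
  assert (q = s).
  { destruct (Nat.eq_dec q s); auto. exfalso.
    assert (nth s (flip r (flip s x)) false = nth s (flip q (flip t x)) false) by (rewrite E2; auto).
    rewrite (nth_flip_neq s r) in H by auto. rewrite nth_flip_eq in H by auto.
    rewrite (nth_flip_neq s q) in H by auto. rewrite (nth_flip_neq s t) in H by auto.
    destruct (nth s x false); discriminate. }
  subst q.
  assert (r = t).
  { destruct (Nat.eq_dec r t); auto. exfalso.
    assert (nth t (flip r (flip s x)) false = nth t (flip s (flip t x)) false) by (rewrite E2; auto).
    rewrite (nth_flip_neq t r) in H by auto. rewrite !(nth_flip_neq t s) in H by auto.
    rewrite nth_flip_eq in H by auto.
    destruct (nth t x false); discriminate. }
  subst. auto.
Qed.

Definition nbrs (x : list bool) := map (fun k => flip k x) (seq 0 (length x)).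

Lemma NoDup_map_seq {A} (F : nat -> A) n :
  (forall i j, i < n -> j < n -> F i = F j -> i = j) -> NoDup (map F (seq 0 n)).
Proof.
  intros H. apply (NoDup_nth _ (F 0)). rewrite length_map, length_seq. intros i j Hi Hj E.
  rewrite (map_nth F (seq 0 n) 0 i), (map_nth F (seq 0 n) 0 j) in E.
  rewrite !seq_nth in E by auto. simpl in E. auto.
Qed.

Lemma in_map_seq {A} (F : nat -> A) n y : In y (map F (seq 0 n)) <-> exists i, i < n /\ y = F i.
Proof.
  rewrite in_map_iff. split.
  - intros [i [<- Hi]]. apply in_seq in Hi. exists i; split; auto; lia.
  - intros [i [Hi ->]]. exists i; split; auto. apply in_seq; lia.
Qed.

Lemma nbrs_NoDup x : NoDup (nbrs x).
Proof. apply NoDup_map_seq. intros; eapply flip_inj_idx; eauto. Qed.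

Lemma nbrs_length x : length (nbrs x) = length x.
Proof. unfold nbrs. rewrite length_map, length_seq. auto. Qed.

Lemma conn : forall x (P : list bool -> Prop) y, length x = length y -> P x ->
  (forall z k, length z = length x -> k < length x -> nth k z false <> nth k y false -> P z -> P (flip k z)) -> P y.
Proof.
  induction x as [|a x IH]; intros P [|b y] Hl Px Hstep; simpl in *; try discriminate; auto.
  assert (P (a :: y)).
  { apply (IH (fun z => P (a :: z)) y); auto.
    intros z k Hz Hk Hn Pz. apply (Hstep (a :: z) (S k)); simpl; auto; lia. }
  destruct (Bool.bool_dec a b). { subst; auto. }
  apply (Hstep (a :: y) 0) in H; simpl; auto; try lia.
  simpl in H. destruct a, b; simpl in *; auto; congruence.
Qed.

Definition emb (n m : nat) (s : list bool -> list bool) : Prop :=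
  (forall l, length l = n -> length (s l) = m) /\
  (forall l l', length l = n -> length l' = n -> s l = s l' -> l = l') /\
  (forall l l', length l = n -> length l' = n ->
     (hamming (s l) (s l') = 1 <-> hamming l l' = 1)).

Definition img (n : nat) (s : list bool -> list bool) (v : list bool) : Prop :=
  exists l, length l = n /\ s l = v.

Lemma emb_nbr n m s l k : emb n m s -> length l = n -> k < n ->
  exists j, j < m /\ s (flip k l) = flip j (s l).
Proof.
  intros [Hl [Hi Ha]] Hn Hk.
  assert (hamming (s l) (s (flip k l)) = 1).
  { apply Ha; auto. rewrite flip_length; auto. apply hamming_flip; lia. }
  apply hamming_1 in H; [|rewrite Hl, Hl; auto; rewrite flip_length; auto].
  destruct H as [j [Hj E]]. rewrite Hl in Hj; auto. eauto.
Qed.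

Lemma snbrs_NoDup n m s l : emb n m s -> length l = n ->
  NoDup (map (fun k => s (flip k l)) (seq 0 n)).
Proof.
  intros [Hl [Hi Ha]] Hn. apply NoDup_map_seq. intros i j Hi' Hj' E.
  apply Hi in E; try (rewrite flip_length; auto). eapply flip_inj_idx; eauto; lia.
Qed.

Lemma emb_le n m s : emb n m s -> n <= m.
Proof.
  intros He. set (l0 := repeat false n).
  assert (Hl0 : length l0 = n) by apply repeat_length.
  pose proof (snbrs_NoDup n m s l0 He Hl0) as ND.
  apply NoDup_incl_length with (l' := nbrs (s l0)) in ND.
  - rewrite length_map, length_seq, nbrs_length in ND. destruct He as [Hl _]. rewrite Hl in ND; auto.
  - intros y Hy. apply in_map_seq in Hy. destruct Hy as [k [Hk ->]].
    destruct (emb_nbr n m s l0 k He Hl0 Hk) as [j [Hj E]]. rewrite E.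
    unfold nbrs. apply in_map_seq. exists j; split; auto. destruct He as [Hl _]. rewrite Hl; auto.
Qed.

Lemma exit_exists n s l : emb n (S n) s -> length l = n ->
  exists i, i < S n /\ ~ img n s (flip i (s l)).
Proof.
  intros He Hn. apply NNPP. intros Hc.
  pose proof (snbrs_NoDup n (S n) s l He Hn) as ND.
  pose proof (nbrs_NoDup (s l)) as ND2.
  apply NoDup_incl_length with (l' := map (fun k => s (flip k l)) (seq 0 n)) in ND2.
  - rewrite length_map, length_seq, nbrs_length in ND2. destruct He as [Hl _]. rewrite Hl in ND2; auto. lia.
  - intros y Hy. unfold nbrs in Hy. apply in_map_seq in Hy. destruct Hy as [i [Hi ->]].
    destruct He as [Hl [Hin Ha]]. rewrite Hl in Hi by auto.
    assert (img n s (flip i (s l))).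
    { apply NNPP. intros Hn'. apply Hc. exists i; split; auto. }
    destruct H as [l' [Hl' E]].
    assert (hamming (s l) (s l') = 1) by (rewrite E; apply hamming_flip; rewrite Hl; auto).
    apply (proj1 (Ha l l' Hn Hl')) in H. apply hamming_1 in H; [|lia]. destruct H as [k [Hk ->]].
    apply in_map_seq. exists k; split; [lia|]. auto.
Qed.

Lemma exit_unique n s l i j : emb n (S n) s -> length l = n -> i < S n -> j < S n ->
  ~ img n s (flip i (s l)) -> ~ img n s (flip j (s l)) -> i = j.
Proof.
  intros He Hn Hi Hj Ni Nj. destruct (Nat.eq_dec i j) as [|Hij]; auto. exfalso.
  assert (Hsl : length (s l) = S n) by (destruct He as [Hl _]; auto).
  set (L := flip i (s l) :: flip j (s l) :: map (fun k => s (flip k l)) (seq 0 n)).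
  assert (ND : NoDup L).
  { constructor; [|constructor].
    - intros [E|Hin]. { apply flip_inj_idx in E; lia. }
      apply in_map_seq in Hin. destruct Hin as [k [Hk E]]. apply Ni. exists (flip k l).
      rewrite flip_length; auto.
    - intros Hin. apply in_map_seq in Hin. destruct Hin as [k [Hk E]]. apply Nj. exists (flip k l).
      rewrite flip_length; auto.
    - eapply snbrs_NoDup; eauto. }
  apply NoDup_incl_length with (l' := nbrs (s l)) in ND.
  - simpl in ND. rewrite length_map, length_seq, nbrs_length in ND. lia.
  - intros y Hy. unfold nbrs. apply in_map_seq. rewrite Hsl.
    destruct Hy as [<-|[<-|Hy]]; eauto.
    apply in_map_seq in Hy. destruct Hy as [k [Hk ->]].
    destruct (emb_nbr n (S n) s l k He Hn Hk) as [j' [Hj' E]]. eauto.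
Qed.

Lemma exit_adj n s l k i : emb n (S n) s -> length l = n -> k < n -> i < S n ->
  ~ img n s (flip i (s l)) -> ~ img n s (flip i (s (flip k l))).
Proof.
  intros He Hn Hk Hi Ni Ci.
  pose proof He as [Hl [Hin Ha]].
  assert (Hsl : length (s l) = S n) by auto.
  destruct (emb_nbr n (S n) s l k He Hn Hk) as [j [Hj E]].
  assert (Hji : j <> i). { intros ->. apply Ni. exists (flip k l). rewrite flip_length; auto. }
  destruct Ci as [l2 [Hl2 E2]]. rewrite E in E2.
  destruct (hamming_1 (flip k l) l2) as [q' [Hq' E4]].
  { rewrite flip_length; lia. }
  { apply (proj1 (Ha (flip k l) l2 ltac:(rewrite flip_length; auto) Hl2)).
    rewrite E2, E. apply hamming_flip. rewrite flip_length; lia. }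
  rewrite flip_length in Hq'. subst l2.
  destruct (Nat.eq_dec q' k).
  { subst. rewrite flip_flip in E2. 
    assert (hamming (s l) (flip i (flip j (s l))) = 2) by (apply hamming_flip2; lia).
    rewrite <- E2, hamming_refl in H. discriminate. }
  set (l3 := flip q' l).
  assert (Hl3 : length l3 = n) by (unfold l3; rewrite flip_length; auto).
  set (x := flip j (s l)).
  assert (Hx : length x = S n) by (unfold x; rewrite flip_length; auto).
  destruct (common_nbr j i x (s l3)) as [C|C]; auto; try lia.
  - rewrite Hl; auto.
  - unfold x. rewrite flip_flip. apply (proj2 (Ha l3 l Hl3 Hn)). unfold l3. rewrite hamming_sym. apply hamming_flip. lia.
  - unfold x. rewrite <- E2. apply (proj2 (Ha l3 (flip q' (flip k l)) Hl3 ltac:(rewrite !flip_length; auto))). unfold l3.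
    rewrite (flip_comm q' k). apply hamming_flip. rewrite flip_length; lia.
  - unfold x in C. rewrite <- E in C. apply Hin in C; auto; [|rewrite flip_length; auto].
    unfold l3 in C. apply flip_inj_idx in C; lia.
  - unfold x in C. rewrite flip_comm, flip_flip in C. apply Ni. exists l3. auto.
Qed.

Lemma facet_core n s : emb n (S n) s ->
  exists i b, i < S n /\ forall v, length v = S n -> (img n s v <-> nth i v false = b).
Proof.
  intros He. pose proof He as [Hl [Hin Ha]].
  set (l0 := repeat false n). assert (Hl0 : length l0 = n) by apply repeat_length.
  destruct (exit_exists n s l0 He Hl0) as [i [Hi Ni]].
  assert (Hall : forall l, length l = n -> ~ img n s (flip i (s l))).
  { intros l Hln. apply (conn l0 (fun l => ~ img n s (flip i (s l))) l); auto; try lia.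
    intros z k Hz Hk _ Nz. apply exit_adj; auto; lia. }
  exists i, (nth i (s l0) false). split; auto.
  assert (Hnth : forall l, length l = n -> nth i (s l) false = nth i (s l0) false).
  { intros l Hln. apply (conn l0 (fun l => nth i (s l) false = nth i (s l0) false) l); auto; try lia.
    intros z k Hz Hk _ Ez. rewrite Hl0 in Hz, Hk.
    destruct (emb_nbr n (S n) s z k He Hz Hk) as [j [Hj E]]. rewrite E.
    assert (j <> i). { intros ->. apply (Hall z Hz). exists (flip k z). rewrite flip_length; auto. }
    rewrite nth_flip_neq; auto. }
  intros v Hv. split.
  - intros [l [Hln <-]]. auto.
  - intros Ev.
    apply (conn (s l0) (fun z => img n s z) v); auto.
    + rewrite Hl; auto.
    + exists l0; auto.
    + intros z k Hz Hk Nk [l [Hln <-]].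
      rewrite Hl in Hk by auto.
      assert (k <> i). { intros ->. apply Nk. rewrite Ev. auto. }
      apply NNPP. intros Nk'. apply H. eapply exit_unique; eauto.
Qed.

Definition cmap {V} (E : V -> V -> Prop) (m : nat) (f : list bool -> V) : Prop :=
  (forall l l', length l = m -> length l' = m -> f l = f l' -> l = l') /\
  (forall l l', length l = m -> length l' = m -> (E (f l) (f l') <-> hamming l l' = 1)).

Definition param {V} (E : V -> V -> Prop) (C : V -> Prop) (m : nat) (f : list bool -> V) : Prop :=
  (forall l, length l = m -> C (f l)) /\
  (forall v, C v -> exists l, length l = m /\ f l = v) /\ cmap E m f.

Lemma is_cube_param {V} (E : V -> V -> Prop) C m : is_cube E C m <-> exists f, param E C m f.
Proof.
  unfold is_cube, param, cmap. split.
  - intros [f [H1 [H2 [H3 H4]]]]. exists f; auto.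
  - intros [f [H1 [H2 [H3 H4]]]]. exists f; auto.
Qed.

Definition hiso (m : nat) (t : list bool -> list bool) : Prop :=
  (forall l, length l = m -> length (t l) = m) /\
  (forall l l', length l = m -> length l' = m -> hamming (t l) (t l') = hamming l l') /\
  (forall l', length l' = m -> exists l, length l = m /\ t l = l').

Lemma cmap_comp {V} (E : V -> V -> Prop) m f t : cmap E m f -> hiso m t -> cmap E m (fun l => f (t l)).
Proof.
  intros [Hi Ha] [Ht [Hh Hs]]. split.
  - intros l l' Hl Hl' Eq. apply Hi in Eq; auto. apply hamming_0; [lia|].
    rewrite <- Hh; auto. rewrite Eq. apply hamming_refl.
  - intros l l' Hl Hl'. rewrite Ha; auto. rewrite Hh; auto. tauto.
Qed.

Lemma param_comp {V} (E : V -> V -> Prop) C m f t : param E C m f -> hiso m t -> param E C m (fun l => f (t l)).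
Proof.
  intros [H1 [H2 H3]] Ht. pose proof Ht as [Htl [Hth Hts]]. split; [|split].
  - intros l Hl. apply H1; auto.
  - intros v Hv. destruct (H2 v Hv) as [w [Hw <-]]. destruct (Hts w Hw) as [l [Hl <-]]. eauto.
  - apply cmap_comp; auto.
Qed.


Definition trans {V} (m : nat) (f : list bool -> V) (g : list bool -> V) (l : list bool) : list bool :=
  epsilon (inhabits nil) (fun v => length v = m /\ f v = g l).

Lemma trans_spec {V} (E : V -> V -> Prop) C D n m f g l :
  param E C n g -> param E D m f -> (forall v, C v -> D v) -> length l = n ->
  length (trans m f g l) = m /\ f (trans m f g l) = g l.
Proof.
  intros [G1 [G2 G3]] [F1 [F2 F3]] Hsub Hl. unfold trans. apply epsilon_spec.
  apply F2. apply Hsub. apply G1; auto.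
Qed.

Lemma trans_emb {V} (E : V -> V -> Prop) C D n m f g :
  param E C n g -> param E D m f -> (forall v, C v -> D v) -> emb n m (trans m f g).
Proof.
  intros Pg Pf Hsub. pose proof Pg as [G1 [G2 [Gi Ga]]]. pose proof Pf as [F1 [F2 [Fi Fa]]].
  split; [|split].
  - intros l Hl. apply (trans_spec E C D n m f g l); auto.
  - intros l l' Hl Hl' Eq. apply Gi; auto.
    destruct (trans_spec E C D n m f g l) as [_ <-]; auto.
    destruct (trans_spec E C D n m f g l') as [_ <-]; auto. rewrite Eq; auto.
  - intros l l' Hl Hl'.
    destruct (trans_spec E C D n m f g l) as [L1 E1]; auto.
    destruct (trans_spec E C D n m f g l') as [L2 E2]; auto.
    rewrite <- Fa, E1, E2, Ga; auto. tauto.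
Qed.

Lemma dim_le {V} (E : V -> V -> Prop) C D n m : is_cube E C n -> is_cube E D m -> (forall v, C v -> D v) -> n <= m.
Proof.
  intros HC HD Hs. apply is_cube_param in HC as [g Pg]. apply is_cube_param in HD as [f Pf].
  eapply emb_le. eapply trans_emb; eauto.
Qed.

Lemma dim_unique {V} (E : V -> V -> Prop) C n m : is_cube E C n -> is_cube E C m -> n = m.
Proof. intros H1 H2. pose proof (dim_le E C C n m H1 H2 (fun v h => h)).
  pose proof (dim_le E C C m n H2 H1 (fun v h => h)). lia. Qed.

Lemma facet {V} (E : V -> V -> Prop) C D n f : is_cube E C n -> param E D (S n) f -> (forall v, C v -> D v) ->
  exists i b, i < S n /\ forall v, length v = S n -> (C (f v) <-> nth i v false = b).
Proof.
  intros HC Pf Hs. apply is_cube_param in HC as [g Pg].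
  pose proof (trans_emb E C D n (S n) f g Pg Pf Hs) as He.
  destruct (facet_core n _ He) as [i [b [Hi Hv]]]. exists i, b. split; auto.
  intros v Hvl. rewrite <- Hv by auto. pose proof Pg as [G1 [G2 [Gi Ga]]]. pose proof Pf as [F1 [F2 [Fi Fa]]].
  split.
  - intros Cv. destruct (G2 _ Cv) as [l [Hl El]]. exists l. split; auto.
    destruct (trans_spec E C D n (S n) f g l) as [L1 E1]; auto. apply Fi; auto. congruence.
  - intros [l [Hl <-]]. destruct (trans_spec E C D n (S n) f g l) as [L1 ->]; auto.
Qed.

Fixpoint ins (i : nat) (c : bool) (l : list bool) : list bool :=
  match i with
  | 0 => c :: l
  | S i' => match l with [] => [c] | a :: l' => a :: ins i' c l' end
  end.

Fixpoint del (i : nat) (l : list bool) : list bool :=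
  match l with
  | [] => []
  | a :: l' => match i with 0 => l' | S i' => a :: del i' l' end
  end.

Lemma ins_length i c l : length (ins i c l) = S (length l).
Proof. revert l; induction i; intros [|a l]; simpl; auto. Qed.

Lemma ins_hamming i c c' l l' : length l = length l' ->
  hamming (ins i c l) (ins i c' l') = (if Bool.eqb c c' then 0 else 1) + hamming l l'.
Proof.
  revert l l'; induction i; intros [|a l] [|a' l'] Hl; simpl in *; try discriminate; auto.
  rewrite IHi by auto. lia.
Qed.

Lemma ins_nth i c l : i <= length l -> nth i (ins i c l) false = c.
Proof. revert l; induction i; intros [|a l] Hl; simpl in *; auto; try lia. apply IHi; lia. Qed.

Lemma ins_del i l : i < length l -> ins i (nth i l false) (del i l) = l.
Proof. revert l; induction i; intros [|a l] Hl; simpl in *; try lia; auto.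
  rewrite IHi by lia. auto. Qed.

Lemma del_length i l : i < length l -> length (del i l) = pred (length l).
Proof. revert l; induction i; intros [|a l] Hl; simpl in *; try lia; auto.
  rewrite IHi by lia. lia. Qed.

Definition tau (i : nat) (b : bool) (l : list bool) : list bool :=
  match l with [] => [] | c :: l' => ins i (xorb c b) l' end.

Lemma tau_hiso i b m : i < S m -> hiso (S m) (tau i b).
Proof.
  intros Hi. split; [|split].
  - intros [|c l] Hl; simpl in *; try discriminate. rewrite ins_length; auto.
  - intros [|c l] [|c' l'] Hl Hl'; simpl in *; try discriminate.
    rewrite ins_hamming by lia. destruct c, c', b; simpl; auto.
  - intros l' Hl'. exists (xorb (nth i l' false) b :: del i l'). split.
    + simpl. rewrite del_length; lia.
    + simpl. rewrite xorb_assoc, xorb_nilpotent, xorb_false_r. apply ins_del. lia.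
Qed.

Lemma tau_nth i b c l : i <= length l -> nth i (tau i b (c :: l)) false = xorb c b.
Proof. intros; simpl. apply ins_nth; auto. Qed.

Lemma facet_nf {V} (E : V -> V -> Prop) C D n f : is_cube E C n -> param E D (S n) f -> (forall v, C v -> D v) ->
  exists t, hiso (S n) t /\ forall c l, length l = n -> (C (f (t (c :: l))) <-> c = false).
Proof.
  intros HC Pf Hs. destruct (facet E C D n f HC Pf Hs) as [i [b [Hi Hv]]].
  exists (tau i b). split. { apply tau_hiso; auto. }
  intros c l Hl. rewrite Hv.
  - rewrite tau_nth by lia. destruct c, b; simpl; split; congruence.
  - destruct (tau_hiso i b n Hi) as [Ht _]. apply Ht. simpl; auto.
Qed.

Definition cover {V} (E : V -> V -> Prop) (C D : V -> Prop) : Prop :=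
  exists n, is_cube E C n /\ is_cube E D (S n) /\ (forall v, C v -> D v).

Lemma subdiv_cover {V} (E : V -> V -> Prop) C D : subdiv_adj E C D <-> cover E C D \/ cover E D C.
Proof. unfold subdiv_adj, cover. split.
  - intros [n [[H1 [H2 H3]]|[H1 [H2 H3]]]]; [left|right]; exists n; auto.
  - intros [[n [H1 [H2 H3]]]|[n [H1 [H2 H3]]]]; exists n; [left|right]; auto.
Qed.

Lemma cover_nf {V} (E : V -> V -> Prop) C D : cover E C D ->
  exists n f, is_cube E C n /\ param E D (S n) f /\ (forall v, C v -> D v) /\
    forall c l, length l = n -> (C (f (c :: l)) <-> c = false).
Proof.
  intros [n [HC [HD Hs]]]. apply is_cube_param in HD as [f Pf].
  destruct (facet_nf E C D n f HC Pf Hs) as [t [Ht Hc]].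
  exists n, (fun l => f (t l)). split; [auto|split; [apply param_comp; auto|split; auto]].
Qed.

Lemma hamming_cons c c' l l' : hamming (c :: l) (c' :: l') = (if Bool.eqb c c' then 0 else 1) + hamming l l'.
Proof. reflexivity. Qed.

Lemma param_facet {V} (E : V -> V -> Prop) C D n f : param E D (S n) f -> (forall v, C v -> D v) ->
  (forall c l, length l = n -> (C (f (c :: l)) <-> c = false)) ->
  param E C n (fun l => f (false :: l)).
Proof.
  intros [F1 [F2 [Fi Fa]]] Hs Hc. split; [|split; [|split]].
  - intros l Hl. apply Hc; auto.
  - intros v Cv. destruct (F2 v (Hs v Cv)) as [[|c l] [Hw <-]]; simpl in Hw; try discriminate.
    injection Hw as Hw. apply Hc in Cv; auto. subst. eauto.
  - intros l l' Hl Hl' Eq. apply Fi in Eq; simpl; auto. injection Eq; auto.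
  - intros l l' Hl Hl'. rewrite Fa; simpl; auto. simpl; tauto.
Qed.

Lemma cover_nf_edge {V} (E : V -> V -> Prop) C D n f : param E D (S n) f -> 
  (forall c l, length l = n -> (C (f (c :: l)) <-> c = false)) ->
  forall l, length l = n -> E (f (false :: l)) (f (true :: l)) /\ C (f (false :: l)) /\ D (f (true :: l)) /\ ~ C (f (true :: l)).
Proof.
  intros [F1 [F2 [Fi Fa]]] Hc l Hl. split; [|split; [|split]].
  - rewrite Fa; simpl; auto. rewrite hamming_refl. auto.
  - apply Hc; auto.
  - apply F1; simpl; auto.
  - rewrite Hc; auto. discriminate.
Qed.

Lemma interval_adj {V} (E : V -> V -> Prop) x y m : E x y -> in_interval E x y m -> m = x \/ m = y.
Proof.
  intros Hxy [p [q [[Hp Hmin] Hpm]]].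
  assert (length (p ++ q) <= 1) by (apply (Hmin [y]); simpl; auto).
  destruct p as [|z [|z' p]]; simpl in *.
  - auto.
  - destruct Hpm as [_ ->]. destruct q; simpl in *; [|lia]. destruct Hp as [_ ->]; auto.
  - lia.
Qed.

Lemma tri_free {V} (E : V -> V -> Prop) a b d : median_graph E -> E a b -> E b d -> E a d -> False.
Proof.
  intros [Hsym [Hirr [Hconn Hmed]]] Hab Hbd Had.
  destruct (Hmed a b d) as [m [[H1 [H2 H3]] _]].
  apply interval_adj in H1; auto. apply interval_adj in H2; auto. apply interval_adj in H3; auto.
  assert (a <> b) by (intros ->; eapply Hirr; eauto).
  assert (b <> d) by (intros ->; eapply Hirr; eauto).
  assert (a <> d) by (intros ->; eapply Hirr; eauto).
  destruct H1 as [->| ->]; destruct H2; destruct H3; congruence.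
Qed.

Lemma interval_2 {V} (E : V -> V -> Prop) x u y : median_graph E -> E x u -> E u y -> x <> y ->
  in_interval E x y u.
Proof.
  intros HM Hxu Huy Hxy. exists [u], [y]. split; [split|].
  - simpl; auto.
  - intros q Hq. simpl. destruct q as [|z [|z' q]]; simpl in *; try lia.
    + congruence.
    + destruct Hq as [Hxz Hzy]. subst z. exfalso. apply (tri_free E x u y HM Hxu Huy Hxz).
  - simpl; auto.
Qed.

Lemma K23_free {V} (E : V -> V -> Prop) u w x1 x2 x3 : median_graph E -> u <> w ->
  x1 <> x2 -> x1 <> x3 -> x2 <> x3 ->
  E x1 u -> E x2 u -> E x3 u -> E x1 w -> E x2 w -> E x3 w -> False.
Proof.
  intros HM Huw H12 H13 H23 A1 A2 A3 B1 B2 B3. pose proof HM as [Hsym [Hirr [Hconn Hmed]]].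
  destruct (Hmed x1 x2 x3) as [m [_ Huniq]].
  assert (u = m) by (apply Huniq; apply interval_2; auto).
  assert (w = m) by (apply Huniq; apply interval_2; auto).
  congruence.
Qed.

Lemma pred_ext {V} (P Q : V -> Prop) : (forall v, P v <-> Q v) -> P = Q.
Proof. intros H. apply functional_extensionality. intros v. apply propositional_extensionality. auto. Qed.

Definition shor {V} (E : V -> V -> Prop) : relation (V * V) :=
  clos_refl_sym_trans (V * V) (fun e f => square_opp E (fst e) (snd e) (fst f) (snd f)).

Lemma shor_sh {V} (E : V -> V -> Prop) e f : shor E e f -> same_hyperplane E e f.
Proof.
  induction 1.
  - apply rst_step. left. auto.
  - apply rst_refl.
  - apply rst_sym; auto.
  - eapply rst_trans; eauto.
Qed.

Definition Inv {V} (E : V -> V -> Prop) (C D : V -> Prop) (x y : V) : Prop :=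
  E x y /\ ((C x /\ D y /\ ~ C y) \/ (D x /\ C y /\ ~ D y)).

Lemma Inv_sym {V} (E : V -> V -> Prop) C D x y : Inv E C D x y <-> Inv E D C x y.
Proof. unfold Inv. tauto. Qed.

Lemma hamming_ff a b l : b < length l -> hamming (flip a (flip b l)) (flip a l) = 1.
Proof. intros H. rewrite hamming_flip_flip by (rewrite flip_length; auto).
  rewrite hamming_sym. apply hamming_flip; auto. Qed.

Lemma par_edge {V} (E : V -> V -> Prop) : forall k g, cmap E (S k) g ->
  forall l m, length l = k -> length m = k ->
  shor E (g (false :: l), g (true :: l)) (g (false :: m), g (true :: m)).
Proof.
  induction k as [|k IH]; intros g [Gi Ga] l m Hl Hm.
  - destruct l, m; simpl in *; try discriminate. apply rst_refl.
  - destruct l as [|a l1], m as [|b m1]; simpl in *; try discriminate.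
    injection Hl as Hl. injection Hm as Hm.
    apply rst_trans with (g (false :: b :: l1), g (true :: b :: l1)).
    + destruct (Bool.bool_dec a b) as [->|Hab]. { apply rst_refl. }
      apply rst_step. simpl. unfold square_opp. split; [|split; [|split; [|split; [|split]]]].
      * rewrite Ga; simpl; auto. rewrite hamming_refl; destruct a; auto.
      * rewrite Ga; simpl; auto. rewrite hamming_refl; destruct b; auto.
      * rewrite Ga; simpl; auto. rewrite hamming_refl; destruct a, b; simpl; congruence.
      * rewrite Ga; simpl; auto. rewrite hamming_refl; destruct a, b; simpl; congruence.
      * intros Eq. apply Gi in Eq; simpl; auto. discriminate.
      * intros Eq. apply Gi in Eq; simpl; auto. discriminate.
    + set (g' := fun l => g (hd false l :: b :: tl l)).
      assert (Cg : cmap E (S k) g').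
      { split.
        - intros [|c l] [|c' l'] L L' Eq; simpl in *; try discriminate. unfold g' in Eq; simpl in Eq.
          apply Gi in Eq; simpl; auto. injection Eq; intros; subst; auto.
        - intros [|c l] [|c' l'] L L'; simpl in *; try discriminate. unfold g'; simpl.
          rewrite Ga; simpl; auto. destruct b; simpl; tauto. }
      apply (IH g' Cg l1 m1); auto.
Qed.

Lemma Inv_char {V} (E : V -> V -> Prop) C D n f : param E D (S n) f -> (forall v, C v -> D v) ->
  (forall c l, length l = n -> (C (f (c :: l)) <-> c = false)) ->
  forall x y, Inv E C D x y <-> exists l, length l = n /\ x = f (false :: l) /\ y = f (true :: l).
Proof.
  intros Pf Hs Hc x y. split.
  - pose proof Pf as [F1 [F2 [Fi Fa]]].
    intros [Exy [[Cx [Dy NCy]]|[Dx [Cy NDy]]]]; [|exfalso; auto].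
    destruct (F2 x (Hs x Cx)) as [[|c l] [Hw <-]]; simpl in Hw; try discriminate.
    destruct (F2 y Dy) as [[|c' l'] [Hw' <-]]; simpl in Hw'; try discriminate.
    injection Hw as Hw. injection Hw' as Hw'.
    apply Hc in Cx; auto. subst c.
    assert (c' = true). { destruct c'; auto. exfalso. apply NCy. apply Hc; auto. } subst c'.
    rewrite Fa in Exy; simpl; auto. simpl in Exy.
    assert (l = l') by (apply hamming_0; [lia|]; lia). subst. eauto.
  - intros [l [Hl [-> ->]]]. destruct (cover_nf_edge E C D n f Pf Hc l Hl) as [H1 [H2 [H3 H4]]].
    split; auto.
Qed.

Lemma I1_cover {V} (E : V -> V -> Prop) C D x y x' y' : cover E C D ->
  Inv E C D x y -> Inv E C D x' y' -> shor E (x, y) (x', y').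
Proof.
  intros Hcov H1 H2. destruct (cover_nf E C D Hcov) as [n [f [HC [Pf [Hs Hc]]]]].
  rewrite (Inv_char E C D n f Pf Hs Hc) in H1, H2.
  destruct H1 as [l [Hl [-> ->]]]. destruct H2 as [l' [Hl' [-> ->]]].
  apply (par_edge E n f); auto. apply Pf.
Qed.

Lemma I1 {V} (E : V -> V -> Prop) C D x y x' y' : subdiv_adj E C D ->
  Inv E C D x y -> Inv E C D x' y' -> shor E (x, y) (x', y').
Proof.
  intros Ha H1 H2. apply subdiv_cover in Ha as [Ha|Ha].
  - eapply I1_cover; eauto.
  - rewrite Inv_sym in H1, H2. eapply I1_cover; eauto.
Qed.

Lemma I2 {V} (E : V -> V -> Prop) C D : subdiv_adj E C D -> exists x y, Inv E C D x y.
Proof.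
  intros Ha. 
  assert (forall C D, cover E C D -> exists x y, Inv E C D x y).
  { clear. intros C D Hcov. destruct (cover_nf E C D Hcov) as [n [f [HC [Pf [Hs Hc]]]]].
    exists (f (false :: repeat false n)), (f (true :: repeat false n)).
    apply (Inv_char E C D n f Pf Hs Hc). exists (repeat false n). split; auto. apply repeat_length. }
  apply subdiv_cover in Ha as [Ha|Ha]; auto.
  destruct (H D C Ha) as [x [y Hi]]. exists x, y. apply Inv_sym; auto.
Qed.

Lemma cover_dims {V} (E : V -> V -> Prop) C D : cover E C D ->
  exists n, is_cube E C n /\ is_cube E D (S n) /\ (forall v, C v -> D v).
Proof. auto. Qed.

Lemma T1_half {V} (E : V -> V -> Prop) A B C D : median_graph E ->
  cover E A B -> cover E C B -> cover E A D -> cover E C D -> A <> C -> forall v, B v -> D v.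
Proof.
  intros HM [n [HA [HB HAB]]] [n' [HC [HB' HCB]]] [n'' [HA' [HD HAD]]] [n3 [HC' [HD' HCD]]] HAC.
  pose proof (dim_unique E B _ _ HB HB'). assert (n' = n) by lia. subst n'.
  pose proof (dim_unique E A _ _ HA HA'). subst n''.
  apply is_cube_param in HB as [fB PB]. apply is_cube_param in HD as [fD PD].
  destruct (facet E A B n fB HA PB HAB) as [iA [al [HiA FA]]].
  destruct (facet E C B n fB HC PB HCB) as [iC [ga [HiC FC]]].
  pose proof PB as [B1 [B2 [Bi Ba]]]. pose proof PD as [D1 [D2 [Di Da]]].
  intros v Bv. destruct (B2 v Bv) as [l [Hl <-]].
  destruct (classic (A (fB l))) as [Al|NAl]; [auto|].
  destruct (classic (C (fB l))) as [Cl|NCl]; [auto|].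
  rewrite FA in NAl by auto. rewrite FC in NCl by auto.
  destruct (Nat.eq_dec iA iC) as [<-|Hne].
  { destruct (Bool.bool_dec al ga) as [<-|Hag].
    - exfalso. apply HAC. apply pred_ext. intros u. split.
      + intros Au. destruct (B2 u (HAB u Au)) as [w [Hw <-]]. rewrite FC by auto. rewrite <- FA; auto.
      + intros Cu. destruct (B2 u (HCB u Cu)) as [w [Hw <-]]. rewrite FA by auto. rewrite <- FC; auto.
    - exfalso. destruct (nth iA l false), al, ga; congruence. }
  set (la := flip iA l). set (lc := flip iC l). set (lz := flip iA (flip iC l)).
  assert (Lla : length la = S n) by (unfold la; rewrite flip_length; auto).
  assert (Llc : length lc = S n) by (unfold lc; rewrite flip_length; auto).
  assert (Llz : length lz = S n) by (unfold lz; rewrite !flip_length; auto).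
  assert (Aa : A (fB la)).
  { rewrite FA by auto. unfold la. rewrite nth_flip_eq by lia. destruct (nth iA l false), al; simpl; congruence. }
  assert (Cc : C (fB lc)).
  { rewrite FC by auto. unfold lc. rewrite nth_flip_eq by lia. destruct (nth iC l false), ga; simpl; congruence. }
  assert (Az : A (fB lz)).
  { rewrite FA by auto. unfold lz. rewrite nth_flip_eq by (rewrite flip_length; lia).
    rewrite nth_flip_neq by auto. destruct (nth iA l false), al; simpl; congruence. }
  assert (Cz : C (fB lz)).
  { rewrite FC by auto. unfold lz. rewrite nth_flip_neq by auto. rewrite nth_flip_eq by lia.
    destruct (nth iC l false), ga; simpl; congruence. }
  set (u := fB la). set (w := fB lc). set (z := fB lz).
  assert (Huw : u <> w).
  { intros Eq. apply Bi in Eq; auto. unfold la, lc in Eq. apply flip_inj_idx in Eq; lia. }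
  assert (Ezu : E z u).
  { unfold z, u. rewrite Ba by auto. unfold lz, la. apply hamming_ff. lia. }
  assert (Ezw : E z w).
  { unfold z, w. rewrite Ba by auto. unfold lz, lc. rewrite flip_comm. apply hamming_ff. lia. }
  assert (Evu : E (fB l) u).
  { unfold u. rewrite Ba by auto. unfold la. apply hamming_flip. lia. }
  assert (Evw : E (fB l) w).
  { unfold w. rewrite Ba by auto. unfold lc. apply hamming_flip. lia. }
  assert (Hvz : fB l <> z).
  { intros Eq. assert (Eq' : l = lz) by (apply Bi; auto). unfold lz in Eq'.
    pose proof (hamming_flip2 iA iC l ltac:(lia) ltac:(lia) Hne) as Hh2. rewrite <- Eq', hamming_refl in Hh2. discriminate. }
  destruct (D2 u (HAD u Aa)) as [mu [Hmu Emu]].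
  destruct (D2 w (HCD w Cc)) as [mw [Hmw Emw]].
  destruct (D2 z (HAD z Az)) as [mz [Hmz Emz]].
  assert (H1 : hamming mz mu = 1) by (apply Da; auto; rewrite Emz, Emu; auto).
  assert (H2 : hamming mz mw = 1) by (apply Da; auto; rewrite Emz, Emw; auto).
  apply hamming_1 in H1; [|lia]. apply hamming_1 in H2; [|lia].
  destruct H1 as [s [Hs ->]]. destruct H2 as [t [Ht ->]].
  assert (Hst : s <> t) by (intros ->; apply Huw; congruence).
  set (b' := fD (flip s (flip t mz))).
  assert (Lb : length (flip s (flip t mz)) = S n) by (rewrite !flip_length; auto).
  destruct (classic (fB l = b')) as [Eq|Neq].
  { rewrite Eq. apply D1; auto. }
  exfalso.
  apply (K23_free E u w z (fB l) b' HM Huw); auto.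
  - intros Eq. unfold b' in Eq. rewrite <- Emz in Eq. assert (Eq' : mz = flip s (flip t mz)) by (apply Di; auto).
    pose proof (hamming_flip2 s t mz ltac:(lia) ltac:(lia) Hst) as Hh2. rewrite <- Eq', hamming_refl in Hh2. discriminate.
  - unfold b'. rewrite <- Emu. apply (proj2 (Da _ _ Lb Hmu)). apply hamming_ff. lia.
  - unfold b'. rewrite <- Emw. apply (proj2 (Da _ _ Lb Hmw)). rewrite flip_comm. apply hamming_ff. lia.
Qed.

Lemma T1c {V} (E : V -> V -> Prop) A B C D : median_graph E ->
  cover E A B -> cover E C B -> cover E A D -> cover E C D -> A <> C -> B <> D -> False.
Proof.
  intros HM H1 H2 H3 H4 HAC HBD. apply HBD. apply pred_ext. intros v. split.
  - apply (T1_half E A B C D); auto.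
  - apply (T1_half E A D C B); auto.
Qed.

Definition lift (t : list bool -> list bool) (l : list bool) : list bool :=
  match l with [] => [] | c :: l' => c :: t l' end.

Lemma lift_hiso m t : hiso m t -> hiso (S m) (lift t).
Proof.
  intros [Tl [Th Ts]]. split; [|split].
  - intros [|c l] Hl; simpl in *; try discriminate. rewrite Tl; auto.
  - intros [|c l] [|c' l'] Hl Hl'; simpl in *; try discriminate. rewrite Th; auto.
  - intros [|c l'] Hl'; simpl in *; try discriminate. destruct (Ts l') as [l [H1 H2]]; auto.
    exists (c :: l). simpl. rewrite H2; auto.
Qed.

Lemma G2 {V} (E : V -> V -> Prop) Bt M1 M2 T :
  cover E Bt M1 -> cover E M1 T -> cover E Bt M2 -> cover E M2 T -> M1 <> M2 ->
  exists x y, Inv E Bt M1 x y /\ Inv E M2 T x y.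
Proof.
  intros HBM1 HM1T HBM2 HM2T Hne.
  destruct (cover_nf E M1 T HM1T) as [m [f1 [HM1 [P1 [S1 Hc1]]]]].
  pose proof (param_facet E M1 T m f1 P1 S1 Hc1) as Pg1.
  destruct HBM1 as [k [HBt [HM1' SB1]]].
  pose proof (dim_unique E M1 _ _ HM1 HM1'). subst m.
  destruct (facet_nf E Bt M1 k _ HBt Pg1 SB1) as [t [Ht HcB]].
  set (f2 := fun l => f1 (lift t l)).
  assert (P2 : param E T (S (S k)) f2) by (unfold f2; apply (param_comp E T _ f1 (lift t)); auto; apply lift_hiso; auto).
  assert (HM1f2 : forall c l, length l = S k -> (M1 (f2 (c :: l)) <-> c = false)).
  { intros c l Hl. unfold f2; simpl. apply Hc1. destruct Ht as [Tl _]. auto. }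
  assert (HBf2 : forall c l, length l = k -> (Bt (f2 (false :: c :: l)) <-> c = false)).
  { intros c l Hl. unfold f2; simpl. apply HcB; auto. }
  destruct HM2T as [j [HM2 [HT SM2]]].
  assert (HT2 : is_cube E T (S (S k))) by (apply is_cube_param; eauto).
  pose proof (dim_unique E T _ _ HT HT2). assert (j = S k) by lia. subst j.
  destruct (facet E M2 T (S k) f2 HM2 P2 SM2) as [i [b [Hi Hf]]].
  destruct HBM2 as [k' [_ [_ SB2]]].
  set (l0 := repeat false k). assert (Hl0 : length l0 = k) by apply repeat_length.
  assert (Hall : forall l, length l = k -> nth i (false :: false :: l) false = b).
  { intros l Hl. apply Hf; simpl; auto. apply SB2. apply HBf2; auto. }
  pose proof P2 as [F1 [F2 [Fi Fa]]].
  destruct i as [|[|i']].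
  - exfalso. specialize (Hall l0 Hl0). simpl in Hall. subst b. apply Hne. apply pred_ext. intros v. split.
    + intros Mv. destruct (F2 v (S1 v Mv)) as [[|c l] [Hw <-]]; simpl in Hw; try discriminate. injection Hw as Hw.
      rewrite Hf by (simpl; auto). simpl. apply (HM1f2 c l Hw); auto.
    + intros Mv. destruct (F2 v (SM2 v Mv)) as [[|c l] [Hw <-]]; simpl in Hw; try discriminate. injection Hw as Hw.
      rewrite Hf in Mv by (simpl; auto). simpl in Mv. apply (HM1f2 c l Hw); auto.
  - specialize (Hall l0 Hl0) as Hb. simpl in Hb. subst b.
    exists (f2 (false :: false :: l0)), (f2 (false :: true :: l0)).
    assert (Exy : E (f2 (false :: false :: l0)) (f2 (false :: true :: l0))).
    { rewrite Fa; simpl; auto. rewrite hamming_refl; auto. }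
    split; split; auto.
    + left. split; [apply HBf2; auto|split; [apply HM1f2; simpl; auto|]].
      rewrite HBf2; auto. discriminate.
    + left. split; [rewrite Hf; simpl; auto|split; [apply F1; simpl; auto|]].
      rewrite Hf; simpl; auto. discriminate.
  - exfalso. simpl in Hi.
    pose proof (Hall l0 Hl0) as H1. pose proof (Hall (flip i' l0) ltac:(rewrite flip_length; auto)) as H2.
    simpl in H1, H2. rewrite nth_flip_eq in H2 by lia. rewrite <- H1 in H2. destruct (nth i' l0 false); discriminate.
Qed.

Ltac dimeq := repeat match goal with
  | H1 : is_cube ?E ?C ?n, H2 : is_cube ?E ?C ?m |- _ =>
      let h := fresh "hd" in pose proof (dim_unique E C n m H1 H2) as h; clear H2
  end.

Lemma square_common {V} (E : V -> V -> Prop) a b c d : median_graph E ->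
  square_opp (subdiv_adj E) a b c d -> exists x y, Inv E a b x y /\ Inv E c d x y.
Proof.
  intros HM [Hab [Hcd [Hac [Hbd [Had Hbc]]]]].
  assert (Hda : d <> a) by (intros e; apply Had; auto).
  assert (Hcb : c <> b) by (intros e; apply Hbc; auto).
  rewrite subdiv_cover in Hab, Hcd, Hac, Hbd.
  destruct Hab as [Hab|Hab]; destruct Hcd as [Hcd|Hcd]; destruct Hac as [Hac|Hac]; destruct Hbd as [Hbd|Hbd].
  all: first
    [ solve [apply (G2 E a b c d); auto]
    | solve [destruct (G2 E c d a b) as [x [y [H1 H2]]]; auto; exists x, y; auto]
    | solve [destruct (G2 E d c b a) as [x [y [H1 H2]]]; auto; exists x, y; rewrite Inv_sym in H1, H2; auto]
    | solve [destruct (G2 E b a d c) as [x [y [H1 H2]]]; auto; exists x, y; rewrite Inv_sym in H1, H2; auto]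
    | solve [exfalso; apply (T1c E a b d c HM); auto]
    | solve [exfalso; apply (T1c E b a c d HM); auto]
    | exfalso;
      destruct Hab as [n1 [A1 [B1 _]]]; destruct Hcd as [n2 [A2 [B2 _]]];
      destruct Hac as [n3 [A3 [B3 _]]]; destruct Hbd as [n4 [A4 [B4 _]]]; dimeq; lia ].
Qed.

Definition Rel {V} (E : V -> V -> Prop) (e f : (V -> Prop) * (V -> Prop)) : Prop :=
  forall x y x' y', Inv E (fst e) (snd e) x y -> Inv E (fst f) (snd f) x' y' ->
    same_hyperplane E (x, y) (x', y').

Lemma subdiv_sym {V} (E : V -> V -> Prop) C D : subdiv_adj E C D -> subdiv_adj E D C.
Proof. rewrite !subdiv_cover. tauto. Qed.

Lemma sh_main {V} (E : V -> V -> Prop) e f : median_graph E ->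
  same_hyperplane (subdiv_adj E) e f ->
  e = f \/ (subdiv_adj E (fst e) (snd e) /\ subdiv_adj E (fst f) (snd f) /\ Rel E e f).
Proof.
  intros HM. induction 1 as [e f H| e | e f _ IH | e f g _ IH1 _ IH2].
  - right. destruct H as [Hsq|[Ha [E1 E2]]].
    + pose proof Hsq as [H1 [H2 _]]. split; auto. split; auto.
      destruct (square_common E _ _ _ _ HM Hsq) as [x0 [y0 [I1' I2']]].
      intros x y x' y' Ix Iy. apply shor_sh.
      apply rst_trans with (x0, y0); [apply (I1 E (fst e) (snd e)); auto| apply (I1 E (fst f) (snd f)); auto].
    + destruct e as [C D], f as [C' D']; simpl in *; subst.
      split; auto. split; [apply subdiv_sym; auto|].
      intros x y x' y' Ix Iy. simpl in *. rewrite Inv_sym in Iy. apply shor_sh. eapply I1; eauto.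
  - left; auto.
  - destruct IH as [->|[H1 [H2 H3]]]; [left; auto|right]. split; auto. split; auto.
    intros x y x' y' Ix Iy. apply rst_sym. apply H3; auto.
  - destruct IH1 as [->|[H1 [H2 H3]]]; auto.
    destruct IH2 as [<-|[H4 [H5 H6]]]; [right; auto|right].
    split; auto. split; auto.
    destruct (I2 E _ _ H2) as [x0 [y0 I0]].
    intros x y x' y' Ix Iy. eapply rst_trans; [apply (H3 x y x0 y0)|apply (H6 x0 y0 x' y')]; auto.
Qed.

Definition single {V} (a : V) : V -> Prop := fun v => v = a.
Definition pair {V} (a b : V) : V -> Prop := fun v => v = a \/ v = b.

Lemma Inv_basic {V} (E : V -> V -> Prop) a b x y : median_graph E -> E a b ->
  (Inv E (single a) (pair a b) x y <-> x = a /\ y = b).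
Proof.
  intros [Hs [Hirr _]] Hab. unfold Inv, single, pair. split.
  - intros [Exy [[-> [[-> | ->] Ny]]|[_ [-> Ny]]]]; try tauto; exfalso; apply Ny; auto.
  - intros [-> ->]. split; auto. left. split; auto. split; auto. intros ->. eapply Hirr; eauto.
Qed.

Lemma basic_sh {V} (E : V -> V -> Prop) a b a' b' : median_graph E -> E a b -> E a' b' ->
  same_hyperplane (subdiv_adj E) (single a, pair a b) (single a', pair a' b') ->
  same_hyperplane E (a, b) (a', b').
Proof.
  intros HM Hab Hab' H. destruct (sh_main E _ _ HM H) as [Eq|[_ [_ HR]]].
  - injection Eq as E1 E2.
    assert (a = a'). { assert (single a a) by reflexivity. rewrite E1 in H0. auto. }
    subst a'. assert (pair a b b) by (right; reflexivity). rewrite E2 in H0.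
    destruct H0 as [-> | ->]. { exfalso. destruct HM as [_ [Hirr _]]. eapply Hirr; eauto. }
    apply rst_refl.
  - apply HR; simpl; apply Inv_basic; auto.
Qed.

Lemma cube_single {V} (E : V -> V -> Prop) a : median_graph E -> is_cube E (single a) 0.
Proof.
  intros [Hs [Hirr _]]. apply is_cube_param. exists (fun _ => a). split; [|split; [|split]].
  - intros; reflexivity.
  - intros v ->. exists []. auto.
  - intros [|] [|] H1 H2 _; simpl in *; auto; discriminate.
  - intros [|] [|] H1 H2; simpl in *; try discriminate. split; [intros h; exfalso; eapply Hirr; eauto|discriminate].
Qed.

Lemma cube_pair {V} (E : V -> V -> Prop) a b : median_graph E -> E a b -> is_cube E (pair a b) 1.
Proof.
  intros [Hs [Hirr _]] Hab. apply is_cube_param.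
  assert (Hne : a <> b) by (intros ->; eapply Hirr; eauto).
  exists (fun l => if hd false l then b else a). split; [|split; [|split]].
  - intros l _. destruct (hd false l); [right|left]; reflexivity.
  - intros v [-> | ->]; [exists [false]|exists [true]]; auto.
  - intros [|c [|]] [|c' [|]] H1 H2; simpl in *; try discriminate.
    destruct c, c'; auto; intros; congruence.
  - intros [|c [|]] [|c' [|]] H1 H2; simpl in *; try discriminate.
    destruct c, c'; simpl; split; intros; auto; try discriminate; exfalso; eapply Hirr; eauto.
Qed.

Definition sq {V} (a b c d : V) : V -> Prop := fun v => v = a \/ v = b \/ v = c \/ v = d.

Lemma cube_sq {V} (E : V -> V -> Prop) a b c d : median_graph E -> square_opp E a b c d -> is_cube E (sq a b c d) 2.
Proof.
  intros HM [Hab [Hcd [Hac [Hbd [Had Hbc]]]]]. pose proof HM as [Hs [Hirr _]].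
  assert (Nad : ~ E a d) by (intros h; apply (tri_free E a b d HM); auto).
  assert (Nbc : ~ E b c) by (intros h; apply (tri_free E b a c HM); auto).
  assert (a <> b) by (intros ->; eapply Hirr; eauto).
  assert (a <> c) by (intros ->; eapply Hirr; eauto).
  assert (b <> d) by (intros ->; eapply Hirr; eauto).
  assert (c <> d) by (intros ->; eapply Hirr; eauto).
  apply is_cube_param.
  exists (fun l : list bool => match l with x :: y :: _ => if x then (if y then d else b) else (if y then c else a) | _ => a end).
  split; [|split; [|split]].
  - intros [|x [|y [|]]] Hl; simpl in *; try discriminate. unfold sq. destruct x, y; tauto.
  - intros v [-> | [-> | [-> | ->]]]; [exists [false;false]|exists [true;false]|exists [false;true]|exists [true;true]]; auto.
  - intros [|x [|y [|]]] [|x' [|y' [|]]] L1 L2; simpl in *; try discriminate.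
    destruct x, y, x', y'; auto; intros; try congruence; exfalso; auto.
  - intros [|x [|y [|]]] [|x' [|y' [|]]] L1 L2; simpl in *; try discriminate.
    destruct x, y, x', y'; simpl; split; intros; auto; try discriminate; exfalso;
      try (eapply Hirr; eauto; fail); eauto.
Qed.

Lemma cover_sp {V} (E : V -> V -> Prop) a b : median_graph E -> E a b -> cover E (single a) (pair a b).
Proof. intros HM Hab. exists 0. split; [apply cube_single; auto|split; [apply cube_pair; auto|]].
  intros v ->; left; reflexivity. Qed.

Lemma cover_sp' {V} (E : V -> V -> Prop) a b : median_graph E -> E a b -> cover E (single b) (pair a b).
Proof. intros HM Hab. exists 0. split; [apply cube_single; auto|split; [apply cube_pair; auto|]].
  intros v ->; right; reflexivity. Qed.

Lemma adj_of_cover {V} (E : V -> V -> Prop) C D : cover E C D -> subdiv_adj E C D.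
Proof. intros; apply subdiv_cover; auto. Qed.
Lemma adj_of_cover' {V} (E : V -> V -> Prop) C D : cover E D C -> subdiv_adj E C D.
Proof. intros; apply subdiv_cover; auto. Qed.

Lemma lift_square {V} (E : V -> V -> Prop) a b c d : median_graph E -> square_opp E a b c d ->
  same_hyperplane (subdiv_adj E) (single a, pair a b) (single c, pair c d).
Proof.
  intros HM Hsq. pose proof Hsq as [Hab [Hcd [Hac [Hbd [Had Hbc]]]]]. pose proof HM as [Hs [Hirr _]].
  assert (a <> b) by (intros ->; eapply Hirr; eauto).
  assert (a <> c) by (intros ->; eapply Hirr; eauto).
  assert (b <> d) by (intros ->; eapply Hirr; eauto).
  assert (c <> d) by (intros ->; eapply Hirr; eauto).
  pose proof (cube_sq E a b c d HM Hsq) as Csq.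
  assert (Cv : forall C, (forall v, C v -> sq a b c d v) -> is_cube E C 1 -> cover E C (sq a b c d)).
  { intros C HC HC1. exists 1. auto. }
  apply rst_trans with (pair a c, sq a b c d).
  - apply rst_step. left. simpl. split; [|split; [|split; [|split; [|split]]]].
    + apply adj_of_cover, cover_sp; auto.
    + apply adj_of_cover, Cv; [|apply cube_pair; auto]. unfold pair, sq; intros v [-> | ->]; tauto.
    + apply adj_of_cover, cover_sp; auto.
    + apply adj_of_cover, Cv; [|apply cube_pair; auto]. unfold pair, sq; intros v [-> | ->]; tauto.
    + intros Eq. assert (sq a b c d b) by (unfold sq; tauto). rewrite <- Eq in H3. unfold single in H3. auto.
    + intros Eq. assert (pair a b b) by (unfold pair; tauto). rewrite Eq in H3. unfold pair in H3.
      destruct H3; auto.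
  - apply rst_sym. apply rst_step. left. simpl. split; [|split; [|split; [|split; [|split]]]].
    + apply adj_of_cover, cover_sp; auto.
    + apply adj_of_cover, Cv; [|apply cube_pair; auto]. unfold pair, sq; intros v [-> | ->]; tauto.
    + apply adj_of_cover, cover_sp'; auto.
    + apply adj_of_cover, Cv; [|apply cube_pair; auto]. unfold pair, sq; intros v [-> | ->]; tauto.
    + intros Eq. assert (sq a b c d a) by (unfold sq; tauto). rewrite <- Eq in H3. unfold single in H3. auto.
    + intros Eq. assert (pair c d d) by (unfold pair; tauto). rewrite Eq in H3. unfold pair in H3.
      destruct H3; auto.
Qed.

Definition basic {V} (e : V * V) : (V -> Prop) * (V -> Prop) := (single (fst e), pair (fst e) (snd e)).

Lemma lift_shor {V} (E : V -> V -> Prop) e f : median_graph E -> shor E e f ->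
  (E (fst e) (snd e) <-> E (fst f) (snd f)) /\
  (E (fst e) (snd e) -> same_hyperplane (subdiv_adj E) (basic e) (basic f)).
Proof.
  intros HM. induction 1 as [e f H| e | e f _ IH | e f g _ IH1 _ IH2].
  - pose proof H as [H1 [H2 _]]. split; [tauto|]. intros _.
    destruct e as [a b], f as [c d]. apply lift_square; auto.
  - split; [tauto|]. intros; apply rst_refl.
  - destruct IH as [H1 H2]. split; [tauto|]. intros h. apply rst_sym. apply H2. tauto.
  - destruct IH1 as [H1 H2], IH2 as [H3 H4]. split; [tauto|]. intros h.
    eapply rst_trans; [apply H2; auto|apply H4; tauto].
Qed.


Lemma reduce {V} (E : V -> V -> Prop) : median_graph E -> forall n C D,
  is_cube E C n -> is_cube E D (S n) -> (forall v, C v -> D v) ->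
  exists x y, E x y /\ same_hyperplane (subdiv_adj E) (C, D) (single x, pair x y).
Proof.
  intros HM. induction n as [|n IH]; intros C D HC HD Hs.
  - destruct (cover_nf E C D (ex_intro _ 0 (conj HC (conj HD Hs)))) as [m [f [HC' [Pf [_ Hc]]]]].
    pose proof (dim_unique E C _ _ HC HC'). subst m.
    pose proof Pf as [F1 [F2 [Fi Fa]]].
    exists (f [false]), (f [true]). split.
    { apply Fa; simpl; auto. }
    assert (EC : C = single (f [false])).
    { apply pred_ext. intros v. split.
      - intros Cv. destruct (F2 v (Hs v Cv)) as [[|c [|]] [Hw <-]]; simpl in Hw; try discriminate.
        apply Hc in Cv; auto. subst; reflexivity.
      - intros ->. apply Hc; auto. }
    assert (ED : D = pair (f [false]) (f [true])).
    { apply pred_ext. intros v. split.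
      - intros Dv. destruct (F2 v Dv) as [[|c [|]] [Hw <-]]; simpl in Hw; try discriminate.
        destruct c; [right|left]; reflexivity.
      - intros [-> | ->]; apply F1; auto. }
    rewrite EC, ED. apply rst_refl.
  - destruct (cover_nf E C D (ex_intro _ (S n) (conj HC (conj HD Hs)))) as [m [f [HC' [Pf [_ Hc]]]]].
    pose proof (dim_unique E C _ _ HC HC'). subst m.
    pose proof Pf as [F1 [F2 [Fi Fa]]].
    set (C' := fun v => exists l, length l = n /\ v = f (false :: false :: l)).
    set (D' := fun v => exists c l, length l = n /\ v = f (c :: false :: l)).
    assert (HC1 : is_cube E C' n).
    { apply is_cube_param. exists (fun l => f (false :: false :: l)). split; [|split; [|split]].
      - intros l Hl. exists l; auto.
      - intros v [l [Hl ->]]. eauto.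
      - intros l l' Hl Hl' Eq. apply Fi in Eq; simpl; auto. injection Eq; auto.
      - intros l l' Hl Hl'. rewrite Fa; simpl; auto. tauto. }
    assert (HD1 : is_cube E D' (S n)).
    { apply is_cube_param. exists (fun l => f (hd false l :: false :: tl l)). split; [|split; [|split]].
      - intros [|c l] Hl; simpl in *; try discriminate. exists c, l; auto.
      - intros v [c [l [Hl ->]]]. exists (c :: l). simpl; auto.
      - intros [|c l] [|c' l'] Hl Hl' Eq; simpl in *; try discriminate.
        apply Fi in Eq; simpl; auto. injection Eq; intros; subst; auto.
      - intros [|c l] [|c' l'] Hl Hl'; simpl in *; try discriminate.
        rewrite Fa; simpl; auto. tauto. }
    assert (PC := param_facet E C D (S n) f Pf Hs Hc).
    assert (Cc : forall l, length l = S n -> C (f (false :: l))) by (intros; apply Hc; auto).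
    assert (NC : forall l, length l = S n -> ~ C (f (true :: l))) by (intros l Hl h; apply Hc in h; auto; discriminate).
    assert (S1 : forall v, C' v -> D' v) by (intros v [l [Hl ->]]; exists false, l; auto).
    assert (S2 : forall v, C' v -> C v) by (intros v [l [Hl ->]]; apply Cc; simpl; auto).
    assert (S3 : forall v, D' v -> D v) by (intros v [c [l [Hl ->]]]; apply F1; simpl; auto).
    set (l0 := repeat false n). assert (Hl0 : length l0 = n) by apply repeat_length.
    destruct (IH C' D' HC1 HD1 S1) as [x [y [Exy Hxy]]].
    exists x, y. split; auto.
    apply rst_trans with (C', D'); auto.
    apply rst_step. left. simpl. split; [|split; [|split; [|split; [|split]]]].
    + apply subdiv_cover. left. exists (S n). auto.
    + apply subdiv_cover. left. exists n. auto.
    + apply subdiv_cover. right. exists n. split; auto.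
    + apply subdiv_cover. right. exists (S n). auto.
    + intros Eq. assert (C (f (false :: true :: l0))) by (apply Cc; simpl; auto).
      rewrite Eq in H. destruct H as [c [l [Hl Eq2]]]. apply Fi in Eq2; simpl; auto. discriminate.
    + intros Eq. assert (D (f (true :: false :: l0))) by (apply F1; simpl; auto).
      rewrite Eq in H. apply S2 in H. apply (NC (false :: l0)); simpl; auto.
Qed.

Lemma mul_inv_r (G : Group) (x : G) : gmul x (ginv x) = gone.
Proof.
  rewrite <- (gone_l G (gmul x (ginv x))).
  rewrite <- (ginv_l G (ginv x)) at 1.
  rewrite <- gassoc. rewrite (gassoc G (ginv x) x (ginv x)). rewrite ginv_l, gone_l. apply ginv_l.
Qed.

Lemma mul_one_r (G : Group) (x : G) : gmul x gone = x.
Proof. rewrite <- (ginv_l G x). rewrite gassoc, mul_inv_r. apply gone_l. Qed.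

Lemma path_translate (G : Group) S (h : G) : forall p x y, is_path (@cay_adj G S) x p y ->
  is_path (@cay_adj G S) (gmul h x) (map (gmul h) p) (gmul h y).
Proof.
  induction p as [|z p IH]; intros x y H; simpl in *.
  - subst; auto.
  - destruct H as [[s [Hs Hz]] Hp]. split; [|apply IH; auto].
    exists s. split; auto. destruct Hz as [-> | ->]; [left|right]; apply gassoc.
Qed.

Lemma dist_translate (G : Group) S (h x y : G) n : dist_le (@cay_adj G S) x y n ->
  dist_le (@cay_adj G S) (gmul h x) (gmul h y) n.
Proof. intros [p [Hp Hl]]. exists (map (gmul h) p). split; [apply path_translate; auto|rewrite length_map; auto]. Qed.

Lemma is_path_app {V} (E : V -> V -> Prop) : forall p q x y z, is_path E x p y -> is_path E y q z -> is_path E x (p ++ q) z.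
Proof. induction p; intros q x y z H1 H2; simpl in *; [subst; auto|]. destruct H1; split; eauto. Qed.

Lemma dist_trans {V} (E : V -> V -> Prop) x y z a b : dist_le E x y a -> dist_le E y z b -> dist_le E x z (a + b).
Proof. intros [p [Hp Hl]] [q [Hq Hl']]. exists (p ++ q). split; [eapply is_path_app; eauto|rewrite length_app; lia]. Qed.

Lemma dist_mono {V} (E : V -> V -> Prop) x y a b : dist_le E x y a -> a <= b -> dist_le E x y b.
Proof. intros [p [Hp Hl]] H. exists p; split; auto; lia. Qed.

Lemma dist_refl {V} (E : V -> V -> Prop) x : dist_le E x x 0.
Proof. exists []. simpl; auto. Qed.

Lemma path_split {V} (E : V -> V -> Prop) : forall p x y v, is_path E x p y -> In v (x :: p) ->
  exists p1 p2, is_path E x p1 v /\ is_path E v p2 y /\ length p1 + length p2 = length p.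
Proof.
  induction p as [|z p IH]; intros x y v H Hin; simpl in *.
  - destruct Hin as [<-|[]]. exists [], []. simpl; auto.
  - destruct Hin as [<-|Hin].
    + exists [], (z :: p). simpl; auto.
    + destruct H as [Hxz Hp]. destruct (IH z y v Hp Hin) as [p1 [p2 [H1 [H2 H3]]]].
      exists (z :: p1), p2. simpl. split; auto.
Qed.

Lemma min_exists (P : nat -> Prop) : (exists n, P n) -> exists n, P n /\ forall m, P m -> n <= m.
Proof.
  intros [n Hn]. revert Hn. induction n as [n IH] using (well_founded_induction lt_wf). intros Hn.
  destruct (classic (exists m, P m /\ m < n)) as [[m [Hm Hlt]]|Hno].
  - apply (IH m Hlt Hm).
  - exists n. split; auto. intros m Hm. apply NNPP. intros Hc. apply Hno. exists m. split; auto. lia.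
Qed.

Lemma geodesic_exists {V} (E : V -> V -> Prop) x y : (exists p, is_path E x p y) -> exists p, geodesic E x p y.
Proof.
  intros Hp. destruct (min_exists (fun n => exists p, is_path E x p y /\ length p = n)) as [n [[p [H1 H2]] Hmin]].
  { destruct Hp as [p Hp]. eauto. }
  exists p. split; auto. intros q Hq. rewrite H2. apply Hmin. eauto.
Qed.

Lemma cay_conn (G : Group) S : generates G S -> forall x y : G, exists p, is_path (@cay_adj G S) x p y.
Proof.
  intros Hg x y. destruct (Hg (gmul (ginv x) y)) as [p Hp].
  apply (path_translate G S x) in Hp. rewrite mul_one_r, gassoc, mul_inv_r, gone_l in Hp. eauto.
Qed.

Lemma geo_len {V} (E : V -> V -> Prop) x p y c : geodesic E x p y -> dist_le E x y c -> length p <= c.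
Proof. intros [Hp Hm] [q [Hq Hl]]. specialize (Hm q Hq). lia. Qed.

Lemma geo_suffix {V} (E : V -> V -> Prop) x p y w c : geodesic E x p y -> length p <= c -> In w (x :: p) -> dist_le E w y c.
Proof. intros [Hp _] Hl Hin. destruct (path_split E p x y w Hp Hin) as [p1 [p2 [H1 [H2 H3]]]].
  exists p2. split; auto. lia. Qed.

Lemma qc_sub (G : Group) S (H K : G -> Prop) c : (forall g, K g -> H g) ->
  (forall h, H h -> exists k, K k /\ dist_le (@cay_adj G S) h k c) ->
  quasiconvex_wrt G S H -> quasiconvex_wrt G S K.
Proof.
  intros Hsub Hnear [K0 HK]. exists (K0 + c). intros x y p Kx Ky Hp v Hv.
  destruct (HK x y p (Hsub x Kx) (Hsub y Ky) Hp v Hv) as [h [Hh Dh]].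
  destruct (Hnear h Hh) as [k [Kk Dk]]. exists k. split; auto. eapply dist_trans; eauto.
Qed.

Lemma qc_super (G : Group) S (H K : G -> Prop) c : generates G S -> hyperbolic_wrt G S ->
  (forall g, K g -> H g) ->
  (forall h, H h -> exists k, K k /\ dist_le (@cay_adj G S) h k c /\ dist_le (@cay_adj G S) k h c) ->
  quasiconvex_wrt G S K -> quasiconvex_wrt G S H.
Proof.
  intros Hgen [delta Hhyp] Hsub Hnear [K0 HK]. exists (delta + delta + K0 + c + c).
  intros x y p Hx Hy Hp v Hv.
  destruct (Hnear x Hx) as [k1 [K1 [D1 D1']]]. destruct (Hnear y Hy) as [k2 [K2 [D2 D2']]].
  destruct (geodesic_exists _ y k1 (cay_conn G S Hgen y k1)) as [sg Hsg].
  destruct (geodesic_exists _ k1 x (cay_conn G S Hgen k1 x)) as [tau Htau].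
  destruct (geodesic_exists _ k1 k2 (cay_conn G S Hgen k1 k2)) as [rho Hrho].
  destruct (geodesic_exists _ k2 y (cay_conn G S Hgen k2 y)) as [mu Hmu].
  destruct (Hhyp x y k1 p sg tau Hp Hsg Htau v Hv) as [w [Hw Dvw]].
  destruct Hw as [Hw|Hw].
  - destruct (Hhyp y k1 k2 sg rho mu Hsg Hrho Hmu w Hw) as [u [Hu Dwu]].
    destruct Hu as [Hu|Hu].
    + destruct (HK k1 k2 rho K1 K2 Hrho u Hu) as [k [Kk Dk]].
      exists k. split; auto. eapply dist_mono; [eapply dist_trans; [eapply dist_trans; eauto|eauto]|]. lia.
    + assert (Du : dist_le _ u y c) by (eapply geo_suffix; eauto; eapply geo_len; eauto).
      exists k2. split; auto.
      eapply dist_mono; [eapply dist_trans; [eapply dist_trans; [eapply dist_trans; eauto|eauto]|eauto]|]. lia.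
  - assert (Dw : dist_le _ w x c) by (eapply geo_suffix; eauto; eapply geo_len; eauto).
    exists k1. split; auto.
    eapply dist_mono; [eapply dist_trans; [eapply dist_trans; eauto|eauto]|]. lia.
Qed.

Lemma act_inv (G : Group) {V} (act : G -> V -> V) g v : is_action G act -> act (ginv g) (act g v) = v.
Proof. intros [H1 H2]. rewrite <- H2, ginv_l. auto. Qed.

Lemma act_inj (G : Group) {V} (act : G -> V -> V) g v w : is_action G act -> act g v = act g w -> v = w.
Proof. intros Ha Eq. rewrite <- (act_inv G act g v Ha), <- (act_inv G act g w Ha), Eq. auto. Qed.

Lemma image_single (G : Group) {V} (act : G -> V -> V) g a : image_act act g (single a) = single (act g a).
Proof. apply pred_ext. intros v. unfold image_act, single. split.
  - intros [w [-> <-]]; auto.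
  - intros ->. eauto. Qed.

Lemma image_pair (G : Group) {V} (act : G -> V -> V) g a b : image_act act g (pair a b) = pair (act g a) (act g b).
Proof. apply pred_ext. intros v. unfold image_act, pair. split.
  - intros [w [[-> | ->] <-]]; auto.
  - intros [-> | ->]; eauto. Qed.

Lemma image_image (G : Group) {V} (act : G -> V -> V) g C : is_action G act ->
  image_act act (ginv g) (image_act act g C) = C.
Proof. intros Ha. apply pred_ext. intros v. unfold image_act. split.
  - intros [w [[u [Cu <-]] <-]]. rewrite act_inv; auto.
  - intros Cv. exists (act g v). split; [eauto|apply act_inv; auto]. Qed.

Lemma cube_image (G : Group) {V} (E : V -> V -> Prop) (act : G -> V -> V) g C n : is_action G act ->
  (forall (g : G) x y, E x y <-> E (act g x) (act g y)) ->
  is_cube E C n -> is_cube E (image_act act g C) n.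
Proof.
  intros Ha HE HC. apply is_cube_param in HC as [f [F1 [F2 [Fi Fa]]]]. apply is_cube_param.
  exists (fun l => act g (f l)). split; [|split; [|split]].
  - intros l Hl. exists (f l). auto.
  - intros v [w [Cw <-]]. destruct (F2 w Cw) as [l [Hl <-]]. eauto.
  - intros l l' Hl Hl' Eq. apply act_inj in Eq; auto.
  - intros l l' Hl Hl'. rewrite <- HE. auto.
Qed.

Lemma adj_image (G : Group) {V} (E : V -> V -> Prop) (act : G -> V -> V) g C D : is_action G act ->
  (forall (g : G) x y, E x y <-> E (act g x) (act g y)) ->
  subdiv_adj E C D -> subdiv_adj E (image_act act g C) (image_act act g D).
Proof.
  intros Ha HE [n [[H1 [H2 H3]]|[H1 [H2 H3]]]]; exists n; [left|right];
    (split; [apply cube_image; auto|split; [apply cube_image; auto|]]);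
    intros v [w [Cw <-]]; exists w; auto.
Qed.

Lemma image_neq (G : Group) {V} (act : G -> V -> V) g C D : is_action G act -> C <> D ->
  image_act act g C <> image_act act g D.
Proof. intros Ha Hne Eq. apply Hne. rewrite <- (image_image G act g C Ha), <- (image_image G act g D Ha), Eq. auto. Qed.

Definition actp {G : Group} {T} (act : G -> T -> T) (g : G) (e : T * T) : T * T := (act g (fst e), act g (snd e)).

Lemma sh_equiv (G : Group) {V} (E : V -> V -> Prop) (act : G -> V -> V) g e f : is_action G act ->
  (forall (g : G) x y, E x y <-> E (act g x) (act g y)) ->
  same_hyperplane (subdiv_adj E) e f ->
  same_hyperplane (subdiv_adj E) (actp (image_act act) g e) (actp (image_act act) g f).
Proof.
  intros Ha HE. induction 1 as [e f H| e | e f _ IH | e f g' _ IH1 _ IH2].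
  - apply rst_step. destruct H as [[H1 [H2 [H3 [H4 [H5 H6]]]]]|[H1 [H2 H3]]].
    + left. simpl. repeat split; try apply adj_image; auto; apply image_neq; auto.
    + right. simpl. split; [apply adj_image; auto|]. rewrite H2, H3. auto.
  - apply rst_refl.
  - apply rst_sym; auto.
  - eapply rst_trans; eauto.
Qed.

Lemma shor_equiv (G : Group) {V} (E : V -> V -> Prop) (act : G -> V -> V) g e f : is_action G act ->
  (forall (g : G) x y, E x y <-> E (act g x) (act g y)) ->
  shor E e f -> shor E (actp act g e) (actp act g f).
Proof.
  intros Ha HE. induction 1 as [e f H| e | e f _ IH | e f g' _ IH1 _ IH2].
  - apply rst_step. destruct H as [H1 [H2 [H3 [H4 [H5 H6]]]]]. simpl.
    repeat split; try (apply HE; auto); intros Eq; apply act_inj in Eq; auto.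
  - apply rst_refl.
  - apply rst_sym; auto.
  - eapply rst_trans; eauto.
Qed.

Definition rev2 {T} (e : T * T) : T * T := (snd e, fst e).

Lemma shor_swap {V} (E : V -> V -> Prop) e f : (forall x y, E x y -> E y x) ->
  shor E e f -> shor E (rev2 e) (rev2 f).
Proof.
  intros Hs. induction 1 as [e f H| e | e f _ IH | e f g' _ IH1 _ IH2].
  - apply rst_step. destruct H as [H1 [H2 [H3 [H4 [H5 H6]]]]]. simpl.
    repeat split; auto.
  - apply rst_refl.
  - apply rst_sym; auto.
  - eapply rst_trans; eauto.
Qed.

Lemma rev2_rev2 {T} (e : T * T) : rev2 (rev2 e) = e.
Proof. destruct e; auto. Qed.

Lemma sh_or {V} (E : V -> V -> Prop) e f : (forall x y, E x y -> E y x) ->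
  same_hyperplane E e f -> shor E e f \/ shor E e (rev2 f).
Proof.
  intros Hs. induction 1 as [e f H| e | e f _ IH | e f g' _ IH1 _ IH2].
  - destruct H as [H|[H1 [H2 H3]]].
    + left. apply rst_step; auto.
    + right. destruct e, f; unfold rev2; simpl in *; subst. apply rst_refl.
  - left; apply rst_refl.
  - destruct IH as [IH|IH]; [left; apply rst_sym; auto|right].
    apply (shor_swap E) in IH; auto. rewrite rev2_rev2 in IH. apply rst_sym; auto.
  - destruct IH1 as [A1|A1]; destruct IH2 as [A2|A2].
    + left; eapply rst_trans; eauto.
    + right; eapply rst_trans; eauto.
    + right. eapply rst_trans; [eauto|]. apply shor_swap; auto.
    + left. eapply rst_trans; [eauto|]. apply (shor_swap E) in A2; auto. rewrite rev2_rev2 in A2; auto.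
Qed.

Lemma stabb_sub (G : Group) {V} (E : V -> V -> Prop) (act : G -> V -> V) a b k :
  median_graph E -> is_action G act -> (forall (g : G) x y, E x y <-> E (act g x) (act g y)) -> E a b ->
  hyp_stab (subdiv_adj E) (image_act act) (single a) (pair a b) k -> hyp_stab E act a b k.
Proof.
  intros HM Ha HE Hab Hk. unfold hyp_stab in *. rewrite image_single, image_pair in Hk.
  apply basic_sh in Hk; auto. apply HE; auto.
Qed.

Lemma preserve_stabb (G : Group) {V} (E : V -> V -> Prop) (act : G -> V -> V) a b k :
  median_graph E -> E a b -> shor E (a, b) (act k a, act k b) ->
  hyp_stab (subdiv_adj E) (image_act act) (single a) (pair a b) k.
Proof.
  intros HM Hab Hs. unfold hyp_stab. rewrite image_single, image_pair.
  destruct (lift_shor E _ _ HM Hs) as [_ H]. apply (H Hab).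
Qed.

Lemma near (G : Group) S {V} (E : V -> V -> Prop) (act : G -> V -> V) a b :
  generates G S -> median_graph E -> is_action G act -> (forall (g : G) x y, E x y <-> E (act g x) (act g y)) -> E a b ->
  exists c, forall h, hyp_stab E act a b h -> exists k,
    hyp_stab (subdiv_adj E) (image_act act) (single a) (pair a b) k /\
    dist_le (@cay_adj G S) h k c /\ dist_le (@cay_adj G S) k h c.
Proof.
  intros Hgen HM Ha HE Hab. pose proof HM as [Hs _].
  destruct (classic (exists t, shor E (a, b) (act t b, act t a))) as [[t Ht]|Hno].
  - destruct (Hgen (ginv t)) as [p1 Hp1]. destruct (Hgen t) as [p2 Hp2].
    exists (length p1 + length p2). intros h Hh.
    destruct (sh_or E _ _ Hs Hh) as [Hp|Hf].
    + exists h. split; [apply preserve_stabb; auto|].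
      split; apply (dist_mono _ _ _ 0); try apply dist_refl; lia.
    + exists (gmul h (ginv t)). split; [|split].
      * apply preserve_stabb; auto. unfold rev2 in Hf; simpl in Hf.
        pose proof (shor_equiv G E act (ginv t) _ _ Ha HE Ht) as X1. unfold actp in X1; simpl in X1.
        rewrite !act_inv in X1 by auto.
        apply (shor_swap E) in X1; auto. unfold rev2 in X1; simpl in X1.
        apply (shor_equiv G E act h _ _ Ha HE) in X1. unfold actp in X1; simpl in X1.
        apply (shor_swap E) in Hf; auto. unfold rev2 in Hf; simpl in Hf.
        destruct Ha as [A1 A2]. rewrite !A2.
        assert (X2 : shor E (act h (act (ginv t) b), act h (act (ginv t) a)) (b, a)) by (eapply rst_trans; [apply X1|apply rst_sym; auto]).
        apply (shor_swap E) in X2; auto. unfold rev2 in X2; simpl in X2. apply rst_sym; auto.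
      * apply (dist_mono _ _ _ (length p1)); [|lia]. exists (map (gmul h) p1). split; [|rewrite length_map; auto].
        pose proof (path_translate G S h p1 _ _ Hp1) as X. rewrite mul_one_r in X. auto.
      * apply (dist_mono _ _ _ (length p2)); [|lia]. exists (map (gmul (gmul h (ginv t))) p2). split; [|rewrite length_map; auto].
        pose proof (path_translate G S (gmul h (ginv t)) p2 _ _ Hp2) as X. rewrite mul_one_r in X.
        rewrite <- gassoc, ginv_l, mul_one_r in X. auto.
  - exists 0. intros h Hh. exists h. split; [|split; apply dist_refl].
    destruct (sh_or E _ _ Hs Hh) as [Hp|Hf]; [apply preserve_stabb; auto|].
    exfalso. apply Hno. exists h. auto.
Qed.

Lemma stab_eq (G : Group) {V} (E : V -> V -> Prop) (act : G -> V -> V) e f g : is_action G act ->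
  (forall (g : G) x y, E x y <-> E (act g x) (act g y)) ->
  same_hyperplane (subdiv_adj E) e f ->
  (hyp_stab (subdiv_adj E) (image_act act) (fst e) (snd e) g <-> hyp_stab (subdiv_adj E) (image_act act) (fst f) (snd f) g).
Proof.
  intros Ha HE Hef. unfold hyp_stab. pose proof (sh_equiv G E act g e f Ha HE Hef) as X. unfold actp in X.
  destruct e as [C D], f as [C' D']; simpl in *. split; intros Hs.
  - eapply rst_trans; [apply rst_sym; eauto|]. eapply rst_trans; eauto.
  - eapply rst_trans; [eauto|]. eapply rst_trans; [eauto|]. apply rst_sym; auto.
Qed.

Lemma qc_ext (G : Group) S (H K : G -> Prop) : (forall g, H g <-> K g) -> quasiconvex_wrt G S H -> quasiconvex_wrt G S K.
Proof. intros Heq [K0 HK]. exists K0. intros x y p Kx Ky Hp v Hv.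
  destruct (HK x y p (proj2 (Heq x) Kx) (proj2 (Heq y) Ky) Hp v Hv) as [h [Hh Dh]]. exists h. split; auto. apply Heq; auto. Qed.

Theorem lemma3p4 (G : Group) (S : list G) (V : Type) (E : V -> V -> Prop)
    (act : G -> V -> V) :
  @generates G S -> @hyperbolic_wrt G S ->
  median_graph E ->
  is_action G act ->
  (forall (g : G) x y, E x y <-> E (act g x) (act g y)) ->
  (@all_hyp_stab_qc G S V E act <->
   @all_hyp_stab_qc G S (V -> Prop) (subdiv_adj E) (image_act act)).
Proof.
  intros Hgen Hhyp HM Ha HE. split.
  - intros HX C D HCD.
    assert (Hred : exists x y, E x y /\ same_hyperplane (subdiv_adj E) (C, D) (single x, pair x y)).
    { pose proof HCD as Hc. apply subdiv_cover in Hc as [[n [H1 [H2 H3]]]|[n [H1 [H2 H3]]]].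
      - apply (reduce E HM n C D); auto.
      - destruct (reduce E HM n D C H1 H2 H3) as [x [y [Exy Hs]]]. exists x, y. split; auto.
        eapply rst_trans; [|apply Hs]. apply rst_step. right. simpl. auto. }
    destruct Hred as [x [y [Exy Hs]]].
    apply (qc_ext G S (hyp_stab (subdiv_adj E) (image_act act) (single x) (pair x y))).
    { intros g. symmetry. apply (stab_eq G E act (C, D) (single x, pair x y) g Ha HE Hs). }
    destruct (near G S E act x y Hgen HM Ha HE Exy) as [c Hc].
    apply (qc_sub G S (hyp_stab E act x y) _ c).
    + intros g Hg. apply stabb_sub; auto.
    + intros h Hh. destruct (Hc h Hh) as [k [K1 [K2 _]]]. eauto.
    + apply HX; auto.
  - intros HB a b Hab.
    destruct (near G S E act a b Hgen HM Ha HE Hab) as [c Hc].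
    apply (qc_super G S _ (hyp_stab (subdiv_adj E) (image_act act) (single a) (pair a b)) c Hgen Hhyp).
    + intros g Hg. apply stabb_sub; auto.
    + auto.
    + apply HB. apply adj_of_cover, cover_sp; auto.
Qed.
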